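(* If a structure $M$ simply interprets a structure $N$ over $\emptyset$ and $\mathrm{Th}(M)$ is dp-small, then $\mathrm{Th}(N)$ is dp-small.
   Context: Let $M$, $N$ be structures in possibly different languages. For $A\subseteq M$, $M$ simply interprets $N$ over $A$ if there are an $A$-definable set $S\subseteq M$ (a subset of the home sort, i.e. of $M$ itself) and an $A$-definable equivalence relation $E\subseteq M\times M$ on $S$ such that the elements of $N$ are in bijection with $S/E$ and the relations on $S$ induced via this bijection by the relations and functions of $N$ are $A$-definable in $M$. For a complete theory $T$ in language $L$ with monster model $\mathcal{U}$ ($\mathcal{U}_y$ the $|y|$-tuples from $\mathcal{U}$): a partial type $\pi(x)$ is dp-small if there do not exist $L(\mathcal{U})$-formulas $\varphi_i(x)$ ($i<\omega$), an $L$-formula $\psi(x;y)$ and $b_j\in\mathcal{U}_y$ ($j<\omega$) such that for all $i_0,j_0<\omega$ the type $\pi(x)\cup\{\varphi_{i_0}(x),\psi(x;b_{j_0})\}\cup\{\neg\varphi_i(x): i\ne i_0\}\cup\{\neg\psi(x;b_j): j\neq j_0\}$ is consistent. $T$ is dp-small if $x=x$ is dp-small for $x$ a single variable. *)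

(* Defs.v *)
From mathcomp Require Import ssreflect ssrfun ssrbool eqtype ssrnat fintype.
Set Implicit Arguments.
Unset Strict Implicit.
Unset Printing Implicit Defensive.

Record language : Type := Language {
  Func : Type;
  Rel : Type;
  farity : Func -> nat;
  rarity : Rel -> nat
}.

Inductive term (L : language) : Type :=
| Var : nat -> term L
| App : forall f : Func L, ('I_(farity f) -> term L) -> term L.

Inductive formula (L : language) : Type :=
| Fals : formula L
| Equ : term L -> term L -> formula L
| Atom : forall r : Rel L, ('I_(rarity r) -> term L) -> formula L
| Neg : formula L -> formula L
| Conj : formula L -> formula L -> formula L
| Disj : formula L -> formula L -> formula L
| Imp : formula L -> formula L -> formula L
| All : nat -> formula L -> formula L
| Ex : nat -> formula L -> formula L.

Record structure (L : language) : Type := Structure {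
  carrier :> Type;
  witness : carrier;
  interp_f : forall f : Func L, ('I_(farity f) -> carrier) -> carrier;
  interp_r : forall r : Rel L, ('I_(rarity r) -> carrier) -> Prop
}.

Definition upd (A : Type) (e : nat -> A) (n : nat) (a : A) : nat -> A :=
  fun k => if k == n then a else e k.

Fixpoint eval (L : language) (M : structure L) (e : nat -> M) (t : term L)
  : M :=
  match t with
  | Var n => e n
  | App f ts => @interp_f L M f (fun i => eval e (ts i))
  end.

Fixpoint sat (L : language) (M : structure L) (e : nat -> M) (phi : formula L)
  : Prop :=
  match phi with
  | Fals => False
  | Equ t1 t2 => eval e t1 = eval e t2
  | Atom r ts => @interp_r L M r (fun i => eval e (ts i))
  | Neg p => ~ sat e p
  | Conj p q => sat e p /\ sat e q
  | Disj p q => sat e p \/ sat e q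
  | Imp p q => sat e p -> sat e q
  | All n p => forall a : M, sat (upd e n a) p
  | Ex n p => exists a : M, sat (upd e n a) p
  end.

(** M and N have the same complete theory: every formula has the same
    universal closure truth value (universal closures range over all
    sentences). *)
Definition elem_equiv (L : language) (M N : structure L) : Prop :=
  forall phi : formula L,
    (forall e : nat -> M, sat e phi) <-> (forall e : nat -> N, sat e phi).

Definition elementary (L : language) (M N : structure L) (h : M -> N) : Prop :=
  forall (phi : formula L) (e : nat -> M), sat e phi <-> sat (h \o e) phi.

(** The monster model of Th(M) is replaced by an arbitrary model U of Th(M)
   (every such model elementarily embeds in the monster model and the
   monster model is such a model).  The single variable x is variable 0.
   An L(U)-formula phi_i(x) is an L-formula [phi i] together with an
   assignment [c i] of parameters from U to its other variables; likewise
   psi(x; b_j) is [psi] with the variables other than 0 assigned by [b j].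
   A partial type over U is consistent iff it is realized in some
   elementary extension of U. *)
Definition type_realized (L : language) (U : structure L)
  (phi : nat -> formula L) (c : nat -> nat -> U)
  (psi : formula L) (b : nat -> nat -> U) (i0 j0 : nat) : Prop :=
  exists (U' : structure L) (h : U -> U'), elementary h /\
  exists a : U',
    sat (upd (h \o c i0) 0 a) (phi i0) /\
    sat (upd (h \o b j0) 0 a) psi /\
    (forall i, i <> i0 -> ~ sat (upd (h \o c i) 0 a) (phi i)) /\
    (forall j, j <> j0 -> ~ sat (upd (h \o b j) 0 a) psi).

Definition dp_small (L : language) (M : structure L) : Prop :=
  ~ exists (U : structure L), elem_equiv M U /\
    exists (phi : nat -> formula L) (c : nat -> nat -> U)
           (psi : formula L) (b : nat -> nat -> U),
      forall i0 j0 : nat, type_realized phi c psi b i0 j0.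

Definition definable0 (L : language) (M : structure L) (n : nat)
  (R : ('I_n -> M) -> Prop) : Prop :=
  exists phi : formula L,
    forall e : nat -> M, sat e phi <-> R (fun i : 'I_n => e (nat_of_ord i)).

Definition simply_interprets0 (L L' : language) (M : structure L)
  (N : structure L') : Prop :=
  exists (S : M -> Prop) (E : M -> M -> Prop) (f : M -> N),
    definable0 (fun v : 'I_1 -> M => S (v ord0)) /\
    definable0 (fun v : 'I_2 -> M => E (v ord0) (v ord_max)) /\
    (forall a b : M, E a b -> S a /\ S b) /\
    (forall a b : M, S a -> S b -> (f a = f b <-> E a b)) /\
    (forall y : N, exists a : M, S a /\ f a = y) /\
    (forall r : Rel L',
        definable0 (fun v : 'I_(rarity r) -> M =>
          (forall i, S (v i)) /\ @interp_r L' N r (f \o v))) /\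
    (forall g : Func L',
        definable0 (fun v : 'I_(farity g).+1 -> M =>
          (forall i, S (v i)) /\
          @interp_f L' N g (fun i => f (v (widen_ord (leqnSn _) i)))
            = f (v ord_max))).

(* Main.v *)
Require Import Defs.
From mathcomp Require Import ssreflect ssrfun ssrbool eqtype ssrnat seq fintype.
From Stdlib Require Import Classical FunctionalExtensionality PropExtensionality
  ProofIrrelevance IndefiniteDescription.
From Stdlib Require Cantor.
From mathcomp Require boolp classical_sets filter.
Set Implicit Arguments.
Unset Strict Implicit.
Unset Printing Implicit Defensive.

Lemma choice_fun (A B : Type) (b0 : B) (P : A -> B -> Prop) :
  exists g : A -> B, forall a, (exists b, P a b) -> P a (g a).
Proof.
have H : forall a, exists b, (exists b, P a b) -> P a b.
  move=> a; case: (classic (exists b, P a b)) => [[b Hb]|Hn].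
  - by exists b.
  - by exists b0 => /Hn.
exists (fun a => proj1_sig (constructive_indefinite_description _ (H a))).
move=> a; exact: (proj2_sig (constructive_indefinite_description _ (H a))).
Qed.

Section Syntax.
Variable L : language.

Fixpoint term_ind' (P : term L -> Prop) (Hv : forall n, P (Var L n))
  (Ha : forall f ts, (forall i, P (ts i)) -> P (@App L f ts)) (t : term L) : P t :=
  match t with
  | Var n => Hv n
  | App f ts => Ha f ts (fun i => term_ind' Hv Ha (ts i))
  end.

Fixpoint rent (s : nat -> nat) (t : term L) : term L :=
  match t with
  | Var n => Var L (s n)
  | App f ts => @App L f (fun i => rent s (ts i))
  end.

Fixpoint renf (s : nat -> nat) (p : formula L) : formula L :=
  match p with
  | Fals => Fals L
  | Equ t1 t2 => Equ (rent s t1) (rent s t2)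
  | Atom r ts => @Atom L r (fun i => rent s (ts i))
  | Neg p => Neg (renf s p)
  | Conj p q => Conj (renf s p) (renf s q)
  | Disj p q => Disj (renf s p) (renf s q)
  | Imp p q => Imp (renf s p) (renf s q)
  | All n p => All (s n) (renf s p)
  | Ex n p => Ex (s n) (renf s p)
  end.

Lemma eval_rent (M : structure L) (e : nat -> M) s t :
  eval e (rent s t) = eval (e \o s) t.
Proof.
elim/term_ind': t => //= f ts IH; congr interp_f; apply: functional_extensionality => i.
exact: IH.
Qed.

Lemma upd_comp (A : Type) (e : nat -> A) s n a :
  injective s -> upd e (s n) a \o s = upd (e \o s) n a.
Proof.
move=> si; apply: functional_extensionality => k; rewrite /upd /=.
by rewrite (inj_eq si).
Qed.

Lemma sat_renf (M : structure L) s (si : injective s) p (e : nat -> M) :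
  sat e (renf s p) <-> sat (e \o s) p.
Proof.
elim: p e => //= [t1 t2|r ts|p IH|p IHp q IHq|p IHp q IHq|p IHp q IHq|n p IH|n p IH] e.
- by rewrite !eval_rent.
- have -> : (fun i => eval e (rent s (ts i))) = (fun i => eval (e \o s) (ts i)).
    by apply: functional_extensionality => i; rewrite eval_rent.
  by [].
- by rewrite IH.
- by rewrite IHp IHq.
- by rewrite IHp IHq.
- by rewrite IHp IHq.
- by split => H a; move: (H a); rewrite IH upd_comp.
- by split => -[a H]; exists a; move: H; rewrite IH upd_comp.
Qed.

Definition conjs (X : eqType) (s : seq X) (F : X -> formula L) : formula L :=
  foldr (fun x acc => Conj acc (F x)) (Neg (Fals L)) s.

Lemma sat_conjs (M : structure L) (X : eqType) (s : seq X) F (e : nat -> M) :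
  sat e (conjs s F) <-> forall x, x \in s -> sat e (F x).
Proof.
elim: s => [|x s IH] /=; first by split => // _ [].
rewrite IH; split.
- by move=> [H1 H2] y; rewrite inE => /orP [/eqP ->|/H1].
- move=> H; split; last by apply: H; rewrite inE eqxx.
  by move=> y ys; apply: H; rewrite inE ys orbT.
Qed.

Definition exs (l : seq nat) (p : formula L) : formula L := foldr (@Ex L) p l.

Lemma sat_exs (M : structure L) l p (e : nat -> M) :
  sat e (exs l p) <-> exists e', (forall w, w \notin l -> e' w = e w) /\ sat e' p.
Proof.
elim: l e => [|x l IH] e /=.
- split; first by move=> H; exists e.
  by move=> [e' [He' H]]; have -> : e = e' by apply: functional_extensionality => w; rewrite He'.
- split.
  + move=> [a /IH [e' [He' H]]]; exists e'; split=> // w; rewrite inE negb_or => /andP [wx wl].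
    by rewrite He' // /upd (negbTE wx).
  + move=> [e' [He' H]]; exists (e' x); apply/IH; exists e'; split=> // w wl.
    rewrite /upd; case: eqP => [->//|/eqP wx]; apply: He'.
    by rewrite inE negb_or wx.
Qed.

End Syntax.

Lemma exists_env (A : Type) (l : seq nat) (vals : nat -> A) (e : nat -> A) :
  uniq l -> exists e', (forall w, w \notin l -> e' w = e w) /\
                       forall i, i < size l -> e' (nth 0 l i) = vals i.
Proof.
elim: l vals => [|x l IH] vals /=.
- by move=> _; exists e; split.
- move=> /andP [xl ul]; have [e'' [H1 H2]] := IH (fun i => vals i.+1) ul.
  exists (upd e'' x (vals 0)); split.
  + move=> w; rewrite inE negb_or => /andP [wx wl]; rewrite /upd (negbTE wx); exact: H1.
  + case=> [|i] /=; first by rewrite /upd eqxx.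
    move=> il; rewrite /upd; case: eqP => [E|_]; last exact: H2.
    by move: xl; rewrite -E mem_nth.
Qed.

Record ultra (D : (nat -> Prop) -> Prop) : Prop := {
  uT : D (fun _ => True);
  uS : forall A B : nat -> Prop, (forall k, A k -> B k) -> D A -> D B;
  uI : forall A B : nat -> Prop, D A -> D B -> D (fun k => A k /\ B k);
  uV : forall A : nat -> Prop, D A \/ D (fun k => ~ A k);
  uP : ~ D (fun _ => False);
  uC : forall m, D (fun k => m <= k);
  uF : forall n (A : 'I_n -> nat -> Prop), (forall i, D (A i)) -> D (fun k => forall i, A i k)
}.

Section Ultra.
Variables (L : language) (M : structure L) (D : (nat -> Prop) -> Prop) (HD : ultra D).

Lemma D_iff (G A B : nat -> Prop) : D G -> (forall k, G k -> (A k <-> B k)) -> (D A <-> D B).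
Proof.
move=> DG H; split => DA.
- apply: (uS HD) (uI HD DG DA) => k [Gk Ak]; by apply/(H k Gk).
- apply: (uS HD) (uI HD DG DA) => k [Gk Ak]; by apply/(H k Gk).
Qed.

Definition eqD (s t : nat -> M) := D (fun k => s k = t k).

Lemma eqD_refl s : eqD s s.
Proof. exact: (uS HD) (uT HD). Qed.
Lemma eqD_sym s t : eqD s t -> eqD t s.
Proof. exact: (uS HD). Qed.
Lemma eqD_trans s t u : eqD s t -> eqD t u -> eqD s u.
Proof. move=> H1 H2; apply: (uS HD) (uI HD H1 H2) => k [-> ->] //. Qed.

Definition Ucar := {P : (nat -> M) -> Prop | exists s, P = eqD s}.
Definition cls (s : nat -> M) : Ucar := exist _ (eqD s) (ex_intro _ s erefl).

Lemma cls_eq s t : cls s = cls t <-> eqD s t.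
Proof.
split.
- move=> H; have : eqD s = eqD t by exact: (f_equal (@proj1_sig _ _) H).
  by move=> ->; apply: eqD_refl.
- move=> H; have E : eqD s = eqD t.
    apply: functional_extensionality => u; apply: propositional_extensionality; split.
    + by move=> H'; apply: eqD_trans (eqD_sym H) H'.
    + by move=> H'; apply: eqD_trans H H'.
  rewrite /cls; move: (ex_intro _ s _) (ex_intro _ t _); rewrite E => p q.
  by rewrite (proof_irrelevance _ p q).
Qed.

Definition repr (x : Ucar) : nat -> M :=
  proj1_sig (constructive_indefinite_description _ (proj2_sig x)).

Lemma cls_repr x : cls (repr x) = x.
Proof.
rewrite /repr; case: (constructive_indefinite_description _ _) => s /= E.
case: x E => P p /= E; subst P; rewrite /cls; congr exist; exact: proof_irrelevance.
Qed.

Lemma repr_cls s : eqD (repr (cls s)) s.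
Proof. by apply/cls_eq; rewrite cls_repr. Qed.

Definition UP : structure L :=
  @Structure L Ucar (cls (fun _ => witness M))
    (fun g args => cls (fun k => interp_f (fun i => repr (args i) k)))
    (fun r args => D (fun k => @interp_r L M r (fun i => repr (args i) k))).

Lemma eval_UP (e : nat -> nat -> M) t :
  @eval L UP (fun w => cls (e w)) t = cls (fun k => eval (fun w => e w k) t).
Proof.
elim/term_ind': t => //= f ts IH.
apply/cls_eq; rewrite /eqD.
apply: (uS HD) (uF HD (fun i => repr_cls (fun k => eval (fun w => e w k) (ts i)))) => k H.
congr interp_f; apply: functional_extensionality => i; rewrite IH; exact: H.
Qed.

Lemma upd_cls (e : nat -> nat -> M) n s :
  upd (fun w => cls (e w)) n (cls s) = (fun w => cls (upd e n s w)).
Proof. by apply: functional_extensionality => w; rewrite /upd; case: eqP. Qed.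

Lemma upd_k (e : nat -> nat -> M) n s k :
  (fun w => upd e n s w k) = upd (fun w => e w k) n (s k).
Proof. by apply: functional_extensionality => w; rewrite /upd; case: eqP. Qed.

Lemma los p (e : nat -> nat -> M) :
  @sat L UP (fun w => cls (e w)) p <-> D (fun k => sat (fun w => e w k) p).
Proof.
elim: p e => [|t1 t2|r ts|p IH|p IHp q IHq|p IHp q IHq|p IHp q IHq|n p IH|n p IH] e /=.
- by split => // /(uP HD).
- by rewrite !eval_UP cls_eq.
- apply: D_iff (uF HD (fun i => repr_cls (fun k => eval (fun w => e w k) (ts i)))) _.
  move=> k H; have -> // : (fun i => repr (@eval L UP (fun w => cls (e w)) (ts i)) k) =
     (fun i => eval (fun w => e w k) (ts i)).
  by apply: functional_extensionality => i; rewrite eval_UP; exact: H.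
- rewrite IH; split.
  + by move=> H; case: (uV HD (fun k => sat (fun w => e w k) p)) => // /H.
  + move=> H1 H2; apply: (uP HD); by apply: (uS HD) (uI HD H1 H2) => k [].
- rewrite IHp IHq; split.
  + by move=> [H1 H2]; apply: uI.
  + by move=> H; split; apply: (uS HD) H => k [].
- rewrite IHp IHq; split.
  + case=> H; first by apply: (uS HD) H => k H'; left.
    by apply: (uS HD) H => k H'; right.
  + move=> H; case: (uV HD (fun k => sat (fun w => e w k) p)) => H1; first by left.
    right; apply: (uS HD) (uI HD H H1) => k [[H2|H2] H3] //.
- rewrite IHp IHq; split.
  + move=> H; case: (uV HD (fun k => sat (fun w => e w k) p)) => H1.
    * by apply: (uS HD) (H H1) => k.
    * by apply: (uS HD) H1 => k H2 /H2.
  + by move=> H1 H2; apply: (uS HD) (uI HD H1 H2) => k [/[apply]].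
- split.
  + move=> H; case: (uV HD (fun k => forall a, sat (upd (fun w => e w k) n a) p)) => // H1.
    have [s Hs] := choice_fun (witness M)
        (fun k a => ~ sat (upd (fun w => e w k) n a) p).
    have := H (cls s); rewrite upd_cls IH => H2.
    exfalso; apply: (uP HD); apply: (uS HD) (uI HD H1 H2) => k [H3].
    rewrite upd_k; apply: Hs; apply: NNPP => H4; apply: H3 => a.
    apply: NNPP => H5; apply: H4; by exists a.
  + move=> H a; rewrite -(cls_repr a) upd_cls IH; apply: (uS HD) H => k H.
    by rewrite upd_k.
- split.
  + move=> [a]; rewrite -(cls_repr a) upd_cls IH; apply: (uS HD) => k.
    by rewrite upd_k => H; eexists; exact: H.
  + move=> H; have [s Hs] := choice_fun (witness M)
        (fun k a => sat (upd (fun w => e w k) n a) p).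
    exists (cls s); rewrite upd_cls IH; apply: (uS HD) H => k /Hs.
    by rewrite upd_k.
Qed.

Lemma UP_equiv : elem_equiv M UP.
Proof.
move=> p; split.
- move=> H E; have -> : E = (fun w => cls (repr (E w))).
    by apply: functional_extensionality => w; rewrite cls_repr.
  by apply/los; apply: (uS HD) (uT HD) => k _; apply: H.
- move=> H e; have := H (fun w => cls (fun _ => e w)); rewrite los => H1.
  apply: NNPP => H2; apply: (uP HD); exact: (uS HD) H1.
Qed.

End Ultra.

Section UltraEx.
Import boolp classical_sets filter.
Lemma ultra_exists : exists D, ultra D.
Proof.
have [G [GU sFG]] := ultraFilterLemma (eventually_filter).
have GF : ProperFilter G by case: GU.
exists G; split.
- exact: filterT.
- by move=> A B AB GA; apply: filterS GA.
- by move=> A B GA GB; apply: filterI.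
- by move=> A; apply: in_ultra_setVsetC.
- by move=> H; have [] := filter_ex H.
- move=> m; apply: sFG; exists m => //.
- move=> n A HA; exact: (@filter_forall nat _ A G _ HA).
Qed.

End UltraEx.

Lemma satC (L : language) (M : structure L) (e : nat -> M) p q :
  sat e (Conj p q) <-> sat e p /\ sat e q.
Proof. by []. Qed.

Definition sigl (l : seq nat) (v : nat) : nat :=
  if v < size l then nth 0 l v else v + (sumn l).+1.

Lemma mem_sumn (l : seq nat) x : x \in l -> x <= sumn l.
Proof.
elim: l => //= y l IH; rewrite inE => /orP [/eqP ->|/IH H]; first exact: leq_addr.
by apply: leq_trans H _; apply: leq_addl.
Qed.

Lemma sigl_inj l : uniq l -> injective (sigl l).
Proof.
move=> ul v w; rewrite /sigl.
case: ifP => vl; case: ifP => wl.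
- by move/eqP; rewrite nth_uniq // => /eqP.
- move=> E; have := mem_sumn (mem_nth 0 vl); rewrite E.
  by rewrite addnS ltnNge leq_addl.
- move=> E; have := mem_sumn (mem_nth 0 wl); rewrite -E.
  by rewrite addnS ltnNge leq_addl.
- by move/addIn.
Qed.

Lemma ren_def (L : language) (M : structure L) n (R : ('I_n -> M) -> Prop) (p : formula L)
  (Hp : forall e : nat -> M, sat e p <-> R (fun i : 'I_n => e (nat_of_ord i)))
  l (ul : uniq l) (sl : size l = n) (e : nat -> M) :
  sat e (renf (sigl l) p) <-> R (fun i : 'I_n => e (nth 0 l i)).
Proof.
rewrite sat_renf; last exact: sigl_inj.
rewrite Hp; have -> // : (fun i : 'I_n => (e \o sigl l) i) = (fun i => e (nth 0 l i)).
by apply: functional_extensionality => i; rewrite /= /sigl sl ltn_ord.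
Qed.

Definition aux (d i : nat) : nat := (Cantor.to_nat (d, i)).*2.+1.
Definition auxl (d k : nat) : seq nat := map (aux d) (iota 0 k).

Lemma aux_inj d i d' i' : aux d i = aux d' i' -> d = d' /\ i = i'.
Proof.
rewrite /aux => H.
have H1 : Cantor.to_nat (d, i) = Cantor.to_nat (d', i').
  by apply: (can_inj doubleK); apply: succn_inj.
by case: (Cantor.to_nat_inj _ _ H1) => -> ->.
Qed.

Lemma aux_even d i v : aux d i <> v.*2.
Proof. by move=> H; have := odd_double v; rewrite -H /= odd_double. Qed.

Lemma size_auxl d k : size (auxl d k) = k.
Proof. by rewrite size_map size_iota. Qed.

Lemma nth_auxl d k i : i < k -> nth 0 (auxl d k) i = aux d i.
Proof. by move=> ik; rewrite (nth_map 0) ?size_iota // nth_iota. Qed.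

Lemma mem_auxl d k w : w \in auxl d k -> exists i, w = aux d i.
Proof. by case/mapP => i _ ->; exists i. Qed.

Lemma uniq_auxl d k : uniq (auxl d k).
Proof.
rewrite map_inj_uniq ?iota_uniq // => i j /aux_inj [_ ->] //.
Qed.

Lemma even_notin_auxl d k v : v.*2 \notin auxl d k.
Proof. by apply/negP => /mem_auxl [i /esym /aux_even]. Qed.

Definition ofnat (A : Type) k (F : 'I_k -> A) (a0 : A) (i : nat) : A :=
  if (insub i : option 'I_k) is Some o then F o else a0.

Lemma ofnat_ord (A : Type) k (F : 'I_k -> A) a0 (o : 'I_k) : ofnat F a0 o = F o.
Proof. by rewrite /ofnat valK. Qed.

Section Tr.
Variables (L L' : language) (M : structure L) (N : structure L').
Variables (S : M -> Prop) (E : M -> M -> Prop) (f : M -> N) (sec : N -> M).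
Hypothesis HE1 : forall a b, E a b -> S a /\ S b.
Hypothesis HE2 : forall a b, S a -> S b -> (f a = f b <-> E a b).
Hypothesis Hsec : forall y, S (sec y) /\ f (sec y) = y.
Variables (thS thE : formula L) (thR : Rel L' -> formula L) (thF : Func L' -> formula L).
Hypothesis HthS : forall e : nat -> M,
  sat e thS <-> (fun v : 'I_1 -> M => S (v ord0)) (fun i => e (nat_of_ord i)).
Hypothesis HthE : forall e : nat -> M,
  sat e thE <-> (fun v : 'I_2 -> M => E (v ord0) (v ord_max)) (fun i => e (nat_of_ord i)).
Hypothesis HthR : forall r (e : nat -> M),
  sat e (thR r) <-> (fun v : 'I_(rarity r) -> M =>
          (forall i, S (v i)) /\ @interp_r L' N r (f \o v)) (fun i => e (nat_of_ord i)).
Hypothesis HthF : forall g (e : nat -> M),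
  sat e (thF g) <-> (fun v : 'I_(farity g).+1 -> M =>
          (forall i, S (v i)) /\
          @interp_f L' N g (fun i => f (v (widen_ord (leqnSn _) i)))
            = f (v ord_max)) (fun i => e (nat_of_ord i)).

Definition Sf m := renf (sigl [:: m]) thS.
Definition Ef a b := renf (sigl [:: a; b]) thE.

Lemma Sf_spec m (e : nat -> M) : sat e (Sf m) <-> S (e m).
Proof. by rewrite /Sf (ren_def HthS). Qed.

Lemma Ef_spec a b (e : nat -> M) : a != b -> (sat e (Ef a b) <-> E (e a) (e b)).
Proof. by move=> ab; rewrite /Ef (ren_def HthE) //= inE ab. Qed.

Fixpoint teq (d : nat) (t : term L') (y : nat) {struct t} : formula L :=
  match t with
  | Var v => Ef v.*2 y
  | App g ts => exs (auxl d (farity g))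
      (Conj (conjs (enum 'I_(farity g)) (fun o => teq d.+1 (ts o) (aux d o)))
            (renf (sigl (rcons (auxl d (farity g)) y)) (thF g)))
  end.


Lemma nth_rcons_auxl d k y (i : 'I_k) :
  nth 0 (rcons (auxl d k) y) (widen_ord (leqnSn k) i) = aux d i.
Proof. by rewrite /= nth_rcons size_auxl ltn_ord nth_auxl. Qed.

Lemma nth_rcons_auxl_max d k y :
  nth 0 (rcons (auxl d k) y) (@ord_max k) = y.
Proof. by rewrite /= nth_rcons size_auxl ltnn eqxx. Qed.

Lemma teq_spec t : forall d y (e : nat -> M), (forall v, S (e v.*2)) ->
  (forall v, y <> v.*2) -> (forall d' j, d <= d' -> y <> aux d' j) ->
  (sat e (teq d t y) <-> S (e y) /\ f (e y) = eval (fun v => f (e v.*2)) t).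
Proof.
elim/term_ind': t => [v|g ts IH] d y e He Hy1 Hy2 /=.
- rewrite Ef_spec; last by apply/eqP => /esym /Hy1.
  split.
  + move=> H; have [S1 S2] := HE1 H; split => //.
    by apply/esym/(HE2 S1 S2).
  + by move=> [Sy Hf]; apply/HE2 => //; rewrite Hf.
- set k := farity g.
  have yl : y \notin auxl d k by apply/negP => /mem_auxl [j /Hy2]; apply.
  have ul : uniq (rcons (auxl d k) y) by rewrite rcons_uniq yl uniq_auxl.
  have sl : size (rcons (auxl d k) y) = k.+1 by rewrite size_rcons size_auxl.
  rewrite sat_exs; split.
  + move=> [e' [Ha /satC [/sat_conjs Hc /(ren_def (HthF g) ul sl) [HS Hi]]]].
    have Ee : (fun v => f (e' v.*2)) = (fun v => f (e v.*2)).
      by apply: functional_extensionality => v; rewrite Ha // even_notin_auxl.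
    have He' : forall v, S (e' v.*2) by move=> v; rewrite Ha ?even_notin_auxl.
    have Hts : forall o : 'I_k, S (e' (aux d o)) /\
                 f (e' (aux d o)) = eval (fun v => f (e v.*2)) (ts o).
      move=> o; rewrite -Ee; apply/(IH o d.+1) => //.
      * by move=> v; apply: aux_even.
      * by move=> d' j dd /aux_inj [E1 _]; move: dd; rewrite -E1 ltnn.
      * by apply: Hc; rewrite mem_enum.
    have := HS ord_max; rewrite nth_rcons_auxl_max Ha // => Sy.
    split => //; rewrite -(Ha y yl); move: Hi; rewrite nth_rcons_auxl_max => <-; congr interp_f.
    apply: functional_extensionality => i; rewrite nth_rcons_auxl.
    exact: (Hts i).2.
  + move=> [Sy Hf].
    have [e' [Ha Hv]] := exists_env
      (ofnat (fun o => sec (eval (fun v => f (e v.*2)) (ts o))) (witness M)) e (uniq_auxl d k).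
    have Hv' : forall o : 'I_k, e' (aux d o) = sec (eval (fun v => f (e v.*2)) (ts o)).
      by move=> o; rewrite -(nth_auxl d (ltn_ord o)) Hv ?size_auxl // ofnat_ord.
    have Ee : (fun v => f (e' v.*2)) = (fun v => f (e v.*2)).
      by apply: functional_extensionality => v; rewrite Ha // even_notin_auxl.
    have He' : forall v, S (e' v.*2) by move=> v; rewrite Ha ?even_notin_auxl.
    exists e'; split => //; apply/satC; split.
    * apply/sat_conjs => o _; apply/IH => //.
      - by move=> v; apply: aux_even.
      - by move=> d' j dd /aux_inj [E1 _]; move: dd; rewrite -E1 ltnn.
      - by rewrite Ee Hv'; apply: Hsec.
    * apply/(ren_def (HthF g) ul sl); split.
      - move=> i; rewrite nth_rcons size_auxl; case: ifP => ik.
        + by rewrite nth_auxl // (Hv' (Ordinal ik)); exact: (Hsec _).1.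
        + have -> : (nat_of_ord i == k) = true.
            by rewrite eqn_leq -ltnS ltn_ord leqNgt ik.
          by rewrite Ha.
      - rewrite nth_rcons_auxl_max Ha // Hf; congr interp_f.
        apply: functional_extensionality => i; rewrite nth_rcons_auxl Hv'.
        by case: (Hsec (eval (fun v => f (e v.*2)) (ts i))).
Qed.


Fixpoint tr (p : formula L') : formula L :=
  match p with
  | Fals => Fals L
  | Equ t1 t2 => exs [:: aux 0 0; aux 0 1]
      (Conj (Conj (teq 1 t1 (aux 0 0)) (teq 1 t2 (aux 0 1))) (Ef (aux 0 0) (aux 0 1)))
  | Atom r ts => exs (auxl 0 (rarity r))
      (Conj (conjs (enum 'I_(rarity r)) (fun o => teq 1 (ts o) (aux 0 o)))
            (renf (sigl (auxl 0 (rarity r))) (thR r)))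
  | Neg p => Neg (tr p)
  | Conj p q => Conj (tr p) (tr q)
  | Disj p q => Disj (tr p) (tr q)
  | Imp p q => Imp (tr p) (tr q)
  | All n p => All n.*2 (Imp (Sf n.*2) (tr p))
  | Ex n p => Ex n.*2 (Conj (Sf n.*2) (tr p))
  end.

Lemma aux0_ok i : (forall v, aux 0 i <> v.*2) /\ (forall d' j, 1 <= d' -> aux 0 i <> aux d' j).
Proof.
split; first by move=> v; apply: aux_even.
by move=> d' j dd /aux_inj [E1 _]; move: dd; rewrite -E1.
Qed.

Lemma upd_double (e : nat -> M) n a :
  (fun v => f (upd e n.*2 a v.*2)) = upd (fun v => f (e v.*2)) n (f a).
Proof.
apply: functional_extensionality => v; rewrite /upd (inj_eq (can_inj doubleK)).
by case: eqP.
Qed.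

Lemma tr_spec p : forall (e : nat -> M), (forall v, S (e v.*2)) ->
  (sat e (tr p) <-> sat (fun v => f (e v.*2)) p).
Proof.
elim: p => [|t1 t2|r ts|p IH|p IHp q IHq|p IHp q IHq|p IHp q IHq|n p IH|n p IH] e He.
- by [].
- have a01 : aux 0 0 != aux 0 1 by apply/eqP => /aux_inj [].
  have nl : forall v, v.*2 \notin [:: aux 0 0; aux 0 1].
    by move=> v; rewrite !inE; apply/norP; split; apply/eqP => /esym /aux_even.
  rewrite sat_exs; split.
  + move=> [e' [Ha /satC [/satC [H1 H2] H3]]].
    have Ee : (fun v => f (e' v.*2)) = (fun v => f (e v.*2)).
      by apply: functional_extensionality => v; rewrite Ha.
    have He' : forall v, S (e' v.*2) by move=> v; rewrite Ha.
    have [o1 o2] := aux0_ok 0; have [o3 o4] := aux0_ok 1.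
    move: H1 H2; rewrite (teq_spec _ He' o1 o2) (teq_spec _ He' o3 o4) Ee.
    move=> [S1 E1] [S2 E2]; rewrite /= -E1 -E2; apply/HE2 => //; exact/(Ef_spec _ a01).
  + move=> Heq.
    have u01 : uniq [:: aux 0 0; aux 0 1] by rewrite cons_uniq mem_seq1 a01.
    have [e' [Ha Hv]] := exists_env
      (fun i => if i == 0 then sec (eval (fun v => f (e v.*2)) t1)
                else sec (eval (fun v => f (e v.*2)) t2)) e u01.
    have Ee : (fun v => f (e' v.*2)) = (fun v => f (e v.*2)).
      by apply: functional_extensionality => v; rewrite Ha.
    have He' : forall v, S (e' v.*2) by move=> v; rewrite Ha.
    have V0 := Hv 0 erefl; have V1 := Hv 1 erefl; simpl in V0, V1.
    have [o1 o2] := aux0_ok 0; have [o3 o4] := aux0_ok 1.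
    exists e'; split => //; apply/satC; split; first (apply/satC; split).
    * by apply/(teq_spec _ He' o1 o2); rewrite V0 Ee; apply: Hsec.
    * by apply/(teq_spec _ He' o3 o4); rewrite V1 Ee; apply: Hsec.
    * apply/(Ef_spec _ a01); rewrite V0 V1; apply/HE2; try exact: (Hsec _).1.
      by rewrite !(Hsec _).2.
- set k := rarity r.
  have sl : size (auxl 0 k) = k by rewrite size_auxl.
  have ul := uniq_auxl 0 k.
  rewrite sat_exs; split.
  + move=> [e' [Ha /satC [/sat_conjs Hc /(ren_def (HthR r) ul sl) [HS Hi]]]].
    have Ee : (fun v => f (e' v.*2)) = (fun v => f (e v.*2)).
      by apply: functional_extensionality => v; rewrite Ha // even_notin_auxl.
    have He' : forall v, S (e' v.*2) by move=> v; rewrite Ha ?even_notin_auxl.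
    have Hts : forall o : 'I_k, f (e' (aux 0 o)) = eval (fun v => f (e v.*2)) (ts o).
      move=> o; have [o1 o2] := aux0_ok o.
      have := Hc o; rewrite mem_enum (teq_spec _ He' o1 o2) Ee => /(_ isT) [].
      by [].
    move: Hi; congr (interp_r _); apply: functional_extensionality => i /=.
    by rewrite nth_auxl // Hts.
  + move=> Hr.
    have [e' [Ha Hv]] := exists_env
      (ofnat (fun o => sec (eval (fun v => f (e v.*2)) (ts o))) (witness M)) e ul.
    have Hv' : forall o : 'I_k, e' (aux 0 o) = sec (eval (fun v => f (e v.*2)) (ts o)).
      by move=> o; rewrite -(nth_auxl 0 (ltn_ord o)) Hv ?size_auxl // ofnat_ord.
    have Ee : (fun v => f (e' v.*2)) = (fun v => f (e v.*2)).
      by apply: functional_extensionality => v; rewrite Ha // even_notin_auxl.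
    have He' : forall v, S (e' v.*2) by move=> v; rewrite Ha ?even_notin_auxl.
    exists e'; split => //; apply/satC; split.
    * apply/sat_conjs => o _; have [o1 o2] := aux0_ok o.
      by apply/(teq_spec _ He' o1 o2); rewrite Ee Hv'; apply: Hsec.
    * apply/(ren_def (HthR r) ul sl); split.
      - by move=> i; rewrite nth_auxl // Hv'; exact: (Hsec _).1.
      - move: Hr; congr (interp_r _); apply: functional_extensionality => i /=.
        by rewrite nth_auxl // Hv' (Hsec _).2.
- by rewrite /= IH.
- by rewrite /= IHp // IHq.
- by rewrite /= IHp // IHq.
- by rewrite /= IHp // IHq.
- rewrite /=; have Hu : forall a, S a -> forall v, S (upd e n.*2 a v.*2).
    by move=> a Sa v; rewrite /upd; case: eqP.
  split.
  + move=> H b; have [Sb fb] := Hsec b; have := H (sec b).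
    rewrite Sf_spec /upd eqxx => /(_ Sb); rewrite IH //; last exact: Hu.
    by rewrite upd_double fb.
  + move=> H a; rewrite Sf_spec /upd eqxx => Sa; rewrite -/(upd e n.*2 a) IH; last exact: Hu.
    by rewrite upd_double.
- rewrite /=; have Hu : forall a, S a -> forall v, S (upd e n.*2 a v.*2).
    by move=> a Sa v; rewrite /upd; case: eqP.
  split.
  + move=> [a []]; rewrite Sf_spec /upd eqxx => Sa; rewrite -/(upd e n.*2 a) IH; last exact: Hu.
    by rewrite upd_double => H; exists (f a).
  + move=> [b H]; have [Sb fb] := Hsec b; exists (sec b); split.
    * by rewrite Sf_spec /upd eqxx.
    * by rewrite IH; [rewrite upd_double fb | exact: Hu].
Qed.

End Tr.

Definition rho (t v : nat) : nat := if v == 0 then 0 else (Cantor.to_nat (t, v)).+1.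

Lemma rho_inj t : injective (rho t).
Proof.
move=> v w; rewrite /rho; case: eqP => [->|v0]; case: eqP => [->|w0] //.
move=> H; have H1 : Cantor.to_nat (t, v) = Cantor.to_nat (t, w) by apply: succn_inj.
by case: (Cantor.to_nat_inj _ _ H1).
Qed.

Definition comb (A : Type) (c b : nat -> nat -> A) (w : nat) : A :=
  match w with
  | 0 => c 0 0
  | w'.+1 => let p := Cantor.of_nat w' in
             if odd p.1 then b p.1./2 p.2 else c p.1./2 p.2
  end.

Lemma combS (A : Type) (c b : nat -> nat -> A) w :
  comb c b w.+1 = if odd (Cantor.of_nat w).1 then b (Cantor.of_nat w).1./2 (Cantor.of_nat w).2
                  else c (Cantor.of_nat w).1./2 (Cantor.of_nat w).2.
Proof. by []. Qed.

Lemma comb_map (A B : Type) (h : A -> B) c b :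
  h \o comb c b = comb (fun i v => h (c i v)) (fun i v => h (b i v)).
Proof.
apply: functional_extensionality => -[|w] //=; by case: ifP.
Qed.

Lemma comb_phi (A : Type) (c b : nat -> nat -> A) i :
  comb c b \o rho i.*2 = (fun v => if v == 0 then c 0 0 else c i v).
Proof.
apply: functional_extensionality => v; rewrite /comp.
rewrite /rho; case: eqP => // _.
by rewrite combS Cantor.cancel_of_to /= odd_double doubleK.
Qed.

Lemma comb_psi (A : Type) (c b : nat -> nat -> A) j :
  comb c b \o rho j.*2.+1 = (fun v => if v == 0 then c 0 0 else b j v).
Proof.
apply: functional_extensionality => v; rewrite /comp.
rewrite /rho; case: eqP => // _.
rewrite combS Cantor.cancel_of_to /= odd_double /=.
by rewrite uphalf_half odd_double doubleK.
Qed.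

Lemma upd_rho (A : Type) (e : nat -> A) t a :
  upd e 0 a \o rho t = upd (e \o rho t) 0 a.
Proof. by rewrite -(upd_comp _ _ _ (@rho_inj t)). Qed.

Lemma upd_ifz (A : Type) (x : A) (g : nat -> A) a :
  upd (fun v => if v == 0 then x else g v) 0 a = upd g 0 a.
Proof. by apply: functional_extensionality => v; rewrite /upd; case: eqP. Qed.

Section Body.
Variables (L : language) (phi : nat -> formula L) (psi : formula L).

Definition fA i := renf (rho i.*2) (phi i).
Definition fB j := renf (rho j.*2.+1) psi.

Definition inner n i0 j0 : formula L :=
  Ex 0 (Conj (Conj (Conj (fA i0) (fB j0))
    (conjs (iota 0 n) (fun i => if i == i0 then Neg (Fals L) else Neg (fA i))))
    (conjs (iota 0 n) (fun j => if j == j0 then Neg (Fals L) else Neg (fB j)))).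

Definition body n : formula L :=
  conjs (iota 0 n) (fun i0 => conjs (iota 0 n) (fun j0 => inner n i0 j0)).

Lemma sat_inner (K : structure L) (e : nat -> K) n i0 j0 :
  sat e (inner n i0 j0) <-> exists a,
    sat (upd (e \o rho i0.*2) 0 a) (phi i0) /\
    sat (upd (e \o rho j0.*2.+1) 0 a) psi /\
    (forall i, i < n -> i <> i0 -> ~ sat (upd (e \o rho i.*2) 0 a) (phi i)) /\
    (forall j, j < n -> j <> j0 -> ~ sat (upd (e \o rho j.*2.+1) 0 a) psi).
Proof.
rewrite /inner /=; split.
- move=> [a [[[H1 H2] /sat_conjs H3] /sat_conjs H4]].
  exists a; move: H1 H2; rewrite /fA /fB !sat_renf ?upd_rho //; try exact: rho_inj.
  move=> H1 H2; split => //; split => //; split.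
  + move=> i ni ii0; have := H3 i; rewrite mem_iota add0n ni.
    move/eqP: ii0 => /negbTE -> /(_ isT) /=; rewrite sat_renf ?upd_rho //; exact: rho_inj.
  + move=> j nj jj0; have := H4 j; rewrite mem_iota add0n nj.
    move/eqP: jj0 => /negbTE -> /(_ isT) /=; rewrite sat_renf ?upd_rho //; exact: rho_inj.
- move=> [a [H1 [H2 [H3 H4]]]]; exists a.
  split; [split; [split|]|].
  + by rewrite /fA sat_renf ?upd_rho //; exact: rho_inj.
  + by rewrite /fB sat_renf ?upd_rho //; exact: rho_inj.
  + apply/sat_conjs => i; rewrite mem_iota add0n => ni; case: eqP => ii0 /=; first by move=> [].
    by rewrite /fA sat_renf ?upd_rho; [exact: H3|exact: rho_inj].
  + apply/sat_conjs => j; rewrite mem_iota add0n => nj; case: eqP => jj0 /=; first by move=> [].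
    by rewrite /fB sat_renf ?upd_rho; [exact: H4|exact: rho_inj].
Qed.

Lemma sat_body (K : structure L) (e : nat -> K) n :
  sat e (body n) <-> forall i0 j0, i0 < n -> j0 < n -> sat e (inner n i0 j0).
Proof.
rewrite /body sat_conjs; split.
- move=> H i0 j0 i0n j0n; have := H i0; rewrite mem_iota add0n i0n => /(_ isT).
  by move/sat_conjs => /(_ j0); rewrite mem_iota add0n j0n => /(_ isT).
- move=> H i0; rewrite mem_iota add0n => i0n; apply/sat_conjs => j0.
  by rewrite mem_iota add0n => j0n; apply: H.
Qed.

Lemma transfer (U : structure L) (c b : nat -> nat -> U) :
  (forall i0 j0, type_realized phi c psi b i0 j0) ->
  forall n, sat (comb c b) (body n).
Proof.
move=> H n; apply/sat_body => i0 j0 _ _.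
have [U'' [h [Hh [a [H1 [H2 [H3 H4]]]]]]] := H i0 j0.
apply/(Hh (inner n i0 j0) (comb c b)); rewrite comb_map; apply/sat_inner.
exists a; rewrite comb_phi comb_psi !upd_ifz; split => //; split => //; split.
- move=> i _ ii0; rewrite comb_phi upd_ifz; exact: H3.
- move=> j _ jj0; rewrite comb_psi upd_ifz; exact: H4.
Qed.

End Body.

Theorem lemma2p6 (L L' : language) (M : structure L) (N : structure L') :
  simply_interprets0 M N -> dp_small M -> dp_small N.
Proof.
move=> [S [E [f [[thS HthS] [[thE HthE] [HE1 [HE2 [Hsurj [HR HF]]]]]]]]] HdpM.
move=> [U' [HU' [phi [c [psi [b Hreal]]]]]].
pose thR r := proj1_sig (constructive_indefinite_description _ (HR r)).
have HthR : forall r (e : nat -> M), sat e (thR r) <-> _ :=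
  fun r => proj2_sig (constructive_indefinite_description _ (HR r)).
pose thF g := proj1_sig (constructive_indefinite_description _ (HF g)).
have HthF : forall g (e : nat -> M), sat e (thF g) <-> _ :=
  fun g => proj2_sig (constructive_indefinite_description _ (HF g)).
pose sec y := proj1_sig (constructive_indefinite_description _ (Hsurj y)).
have Hsec : forall y, S (sec y) /\ f (sec y) = y :=
  fun y => proj2_sig (constructive_indefinite_description _ (Hsurj y)).
have [DD HD] := ultra_exists.
pose TR := tr thS thE thR thF.
have TRspec := tr_spec HE1 HE2 Hsec HthS HthE HthR HthF.
have HN : forall n, exists e : nat -> N, sat e (body phi psi n).
  move=> n; apply: NNPP => H.
  have H' : forall e : nat -> N, sat e (Neg (body phi psi n)) by move=> e He; apply: H; exists e.
  exact: ((HU' (Neg (body phi psi n))).1 H' (comb c b)) (transfer Hreal n).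
have [eN HeN] := choice_fun (fun _ => witness N) (fun n e => sat e (body phi psi n)).
have HeN' : forall n, sat (eN n) (body phi psi n) by move=> n; apply: HeN; apply: HN.
pose P (p : nat * nat * nat) (x : N) :=
  let n := p.1.1 in let i0 := p.1.2 in let j0 := p.2 in
    sat (upd (eN n \o rho i0.*2) 0 x) (phi i0) /\
    sat (upd (eN n \o rho j0.*2.+1) 0 x) psi /\
    (forall i, i < n -> i <> i0 -> ~ sat (upd (eN n \o rho i.*2) 0 x) (phi i)) /\
    (forall j, j < n -> j <> j0 -> ~ sat (upd (eN n \o rho j.*2.+1) 0 x) psi).
have [xN HxN] := choice_fun (witness N) P.
have Hx : forall k i0 j0, i0 < k -> j0 < k -> P (k, i0, j0) (xN (k, i0, j0)).
  move=> k i0 j0 ik jk; apply: HxN.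
  by have := (sat_body _ _ _ _).1 (HeN' k) i0 j0 ik jk => /sat_inner.
pose lift (g : nat -> N) (w : nat) := sec (g w./2).
have Hco : forall (g : nat -> N) x q,
    sat (upd (lift g) 0 (sec x)) (TR q) <-> sat (upd g 0 x) q.
  move=> g x q; rewrite TRspec.
  - have -> // : (fun v => f (upd (lift g) 0 (sec x) v.*2)) = upd g 0 x.
    apply: functional_extensionality => v; rewrite /upd /lift.
    case: (v =P 0) => [->|/eqP v0] /=; first by rewrite (Hsec x).2.
    have -> : (v.*2 == 0) = false by case: v v0.
    by rewrite doubleK (Hsec _).2.
  - move=> v; rewrite /upd /lift; case: eqP => _; exact: (Hsec _).1.
have Kpos : forall (g : nat -> nat -> N) (x : nat -> N) q B,
    (forall k, B < k -> sat (upd (g k) 0 (x k)) q) ->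
    @sat L (UP M DD) (upd (fun w => cls DD (fun k => lift (g k) w)) 0
                          (cls DD (fun k => sec (x k)))) (TR q).
  move=> g x q B H; rewrite upd_cls (los HD).
  apply: (uS HD) (uC HD B.+1) => k Bk; rewrite upd_k Hco; exact: H.
have Kneg : forall (g : nat -> nat -> N) (x : nat -> N) q B,
    (forall k, B < k -> ~ sat (upd (g k) 0 (x k)) q) ->
    ~ @sat L (UP M DD) (upd (fun w => cls DD (fun k => lift (g k) w)) 0
                          (cls DD (fun k => sec (x k)))) (TR q).
  move=> g x q B H; rewrite upd_cls (los HD) => H1.
  apply: (uP HD); apply: (uS HD) (uI HD H1 (uC HD B.+1)) => k [].
  by rewrite upd_k Hco => H2 /H.
apply: HdpM; exists (UP M DD); split; first exact: UP_equiv.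
exists (fun i => TR (phi i)),
  (fun i w => cls DD (fun k => lift (eN k \o rho i.*2) w)),
  (TR psi),
  (fun j w => cls DD (fun k => lift (eN k \o rho j.*2.+1) w)) => i0 j0.
exists (UP M DD), (fun x => x); split; first by [].
exists (cls DD (fun k => sec (xN (k, i0, j0)))).
split; [|split; [|split]].
- apply: (Kpos (fun k => eN k \o rho i0.*2) _ _ (maxn i0 j0)) => k Bk.
  have := Hx k i0 j0; rewrite gtn_max in Bk; case/andP: Bk => h1 h2.
  by case/(_ h1 h2).
- apply: (Kpos (fun k => eN k \o rho j0.*2.+1) _ _ (maxn i0 j0)) => k Bk.
  have := Hx k i0 j0; rewrite gtn_max in Bk; case/andP: Bk => h1 h2.
  by case/(_ h1 h2) => _ [].
- move=> i ii0.
  apply: (Kneg (fun k => eN k \o rho i.*2) _ _ (maxn (maxn i i0) j0)) => k Bk.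
  rewrite !gtn_max in Bk; case/andP: Bk => /andP [h0 h1] h2.
  by have [_ [_ [H _]]] := Hx k i0 j0 h1 h2; apply: H.
- move=> j jj0.
  apply: (Kneg (fun k => eN k \o rho j.*2.+1) _ _ (maxn (maxn j i0) j0)) => k Bk.
  rewrite !gtn_max in Bk; case/andP: Bk => /andP [h0 h1] h2.
  by have [_ [_ [_ H]]] := Hx k i0 j0 h1 h2; apply: H.
Qed.
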